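(* Assume $\mu<0$ and conditions (C1) and (C2). Let $\pi^*_1,\pi^*_2$ be the two marginals of $\pi^*$ on $E$ and $\mu^*=\pi^*(f)$. Then $$\pi^*_1\otimes\pi_Q(f)<\mu^*\quad\text{and}\quad\pi_P\otimes\pi^*_2(f)<\mu^*.$$
   Context: Let $E$ be a finite set and $P,Q$ irreducible aperiodic stochastic $E\times E$ matrices with invariant probability vectors $\pi_P,\pi_Q$; $\pi=\pi_P\otimes\pi_Q$. Let $f:E\times E\to\mathbb Z$ with gcd of its values equal to $1$; $\nu(f)=\sum f\,d\nu$; $\mu=\pi(f)$. A cycle w.r.t. $P$ is a sequence $x_1,\dots,x_n$ with $P(x_k,x_{k+1})>0$ for all $k$, indices mod $n$. (C1): for some $n\ge1$ there are cycles $x_1,\dots,x_n$ w.r.t. $P$ and $y_1,\dots,y_n$ w.r.t. $Q$ with $\sum_kf(x_k,y_k)>0$. (C2): for every $T\ge1$ there are $n\ge1$ and cycles $x_1,\dots,x_n$ w.r.t. $P$ and $y_1,\dots,y_n$ w.r.t. $Q$ with $\sum_kf(x_k,y_k)\ne\sum_kf(x_k,y_{k+T\bmod n})$. Let $\Phi(\theta)_{(x,y),(x',y')}=e^{\theta f(x',y')}P_{x,x'}Q_{y,y'}$, $\varphi(\theta)$ its spectral radius, $\theta^*>0$ the unique positive solution of $\varphi(\theta)=1$, $r^*$ a positive right eigenvector of $\Phi(\theta^* )$ for eigenvalue 1, $R^*_{(x,y),(x',y')}=\frac{r^*(x',y')}{r^*(x,y)}\Phi(\theta^* )_{(x,y),(x',y')}$,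 and $\pi^*$ the invariant probability vector of $R^*$. *)

(* Defs.v *)
From HB Require Import structures.
From mathcomp Require Import all_boot all_order all_algebra.
From mathcomp Require Import complex.
From mathcomp Require Import reals.
From mathcomp Require Import sequences exp.
Set Implicit Arguments. Unset Strict Implicit. Unset Printing Implicit Defensive.
Import Order.TTheory GRing.Theory Num.Theory.
Local Open Scope ring_scope.

Fixpoint mpow (R : realType) (T : finType) (A : T -> T -> R) (n : nat) : T -> T -> R :=
  match n with
  | 0 => fun x y => if x == y then 1 else 0
  | n'.+1 => fun x y => \sum_(z : T) mpow A n' x z * A z y
  end.

Definition stochastic (R : realType) (T : finType) (A : T -> T -> R) : Prop :=
  (forall x y, 0 <= A x y) /\ (forall x, \sum_(y : T) A x y = 1).

Definition irreducible (R : realType) (T : finType) (A : T -> T -> R) : Prop :=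
  forall x y, exists n : nat, 0 < mpow A n x y.

(* period of every state is 1: the gcd of {n >= 1 : A^n(x,x) > 0} is 1 *)
Definition aperiodic (R : realType) (T : finType) (A : T -> T -> R) : Prop :=
  forall (x : T) (d : nat),
    (forall n : nat, (0 < n)%N -> 0 < mpow A n x x -> (d %| n)%N) -> d = 1%N.

Definition invariant_prob (R : realType) (T : finType) (A : T -> T -> R) (p : T -> R) : Prop :=
  (forall x, 0 <= p x) /\ \sum_(x : T) p x = 1 /\
  (forall y, \sum_(x : T) p x * A x y = p y).

Definition is_cycle (R : realType) (T : finType) (A : T -> T -> R) (n : nat) (x : nat -> T) : Prop :=
  forall k : nat, (k < n)%N -> 0 < A (x k) (x ((k.+1) %% n)%N).

Definition gcd_values_one (T : finType) (f : T -> T -> int) : Prop :=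
  forall d : nat, (forall x y, (d %| `|f x y|)%N) -> d = 1%N.

Definition cond_C1 (R : realType) (E : finType) (P Q : E -> E -> R) (f : E -> E -> int) : Prop :=
  exists (n : nat) (x y : nat -> E), (1 <= n)%N /\ is_cycle P n x /\ is_cycle Q n y /\
    (0 < \sum_(k < n) f (x k) (y k))%R.

Definition cond_C2 (R : realType) (E : finType) (P Q : E -> E -> R) (f : E -> E -> int) : Prop :=
  forall T : nat, (1 <= T)%N ->
  exists (n : nat) (x y : nat -> E), (1 <= n)%N /\ is_cycle P n x /\ is_cycle Q n y /\
    \sum_(k < n) f (x k) (y k) != \sum_(k < n) f (x k) (y ((k + T) %% n)%N).

Definition Phi (R : realType) (E : finType) (P Q : E -> E -> R) (f : E -> E -> int)
  (theta : R) : (E * E)%type -> (E * E)%type -> R :=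
  fun u v => expR (theta * (f v.1 v.2)%:~R) * P u.1 v.1 * Q u.2 v.2.

Definition eigenvalue (R : realType) (T : finType) (A : T -> T -> R) (l : R[i]) : Prop :=
  exists v : T -> R[i], (exists i, v i != 0) /\
    forall i, \sum_(j : T) (A i j)%:C%C * v j = l * v i.

Definition spectral_radius_is (R : realType) (T : finType) (A : T -> T -> R) (rho : R) : Prop :=
  (exists l, eigenvalue A l /\ `|l| = rho%:C%C) /\
  (forall l, eigenvalue A l -> `|l| <= rho%:C%C).

Definition Rstar (R : realType) (E : finType) (P Q : E -> E -> R) (f : E -> E -> int)
  (theta : R) (r : (E * E)%type -> R) : (E * E)%type -> (E * E)%type -> R :=
  fun u v => r v / r u * Phi P Q f theta u v.

Definition integ (R : realType) (E : finType) (nu : (E * E)%type -> R) (f : E -> E -> int) : R :=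
  \sum_(u : (E * E)%type) nu u * (f u.1 u.2)%:~R.

Definition prodm (R : realType) (E : finType) (p q : E -> R) : (E * E)%type -> R :=
  fun u => p u.1 * q u.2.

Definition marg1 (R : realType) (E : finType) (nu : (E * E)%type -> R) : E -> R :=
  fun x => \sum_(y : E) nu (x, y).
Definition marg2 (R : realType) (E : finType) (nu : (E * E)%type -> R) : E -> R :=
  fun y => \sum_(x : E) nu (x, y).

(* Main.v *)
Require Import Defs.
From HB Require Import structures.
From mathcomp Require Import all_boot all_order all_algebra.
From mathcomp Require Import complex.
From mathcomp Require Import reals.
From mathcomp Require Import sequences exp.
From mathcomp Require Import lra zify.
Import Order.TTheory GRing.Theory Num.Theory.
Local Open Scope ring_scope.

Set Implicit Arguments. Unset Strict Implicit.


Lemma lnMp (R : realType) (x y : R) : 0 < x -> 0 < y -> ln (x * y) = ln x + ln y.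
Proof. by move=> hx hy; rewrite lnM ?posrE. Qed.

Lemma lnDp (R : realType) (x y : R) : 0 < x -> 0 < y -> ln (x / y) = ln x - ln y.
Proof. by move=> hx hy; rewrite ln_div ?posrE. Qed.

Lemma ln_le_sub1 (R : realType) (t : R) : 0 < t -> ln t <= t - 1.
Proof.
move=> ht; have := expR_ge1Dx (ln t); rewrite lnK ?posrE //; lra.
Qed.

Lemma ln_lt_sub1 (R : realType) (t : R) : 0 < t -> t != 1 -> ln t < t - 1.
Proof.
move=> ht ht1; have : ln t != 0 by rewrite ln_eq0.
move=> /expR_gt1Dx; rewrite lnK ?posrE //; lra.
Qed.

Lemma gibbs (R : realType) (w T : R) : 0 < w -> 0 < T -> w * ln (T / w) <= T - w.
Proof.
move=> hw hT; have := ln_le_sub1 (divr_gt0 hT hw).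
move=> h; have := ler_wpM2l (ltW hw) h.
by rewrite mulrBr mulr1 mulrCA divff ?gt_eqF // mulr1.
Qed.

Lemma gibbs_lt (R : realType) (w T : R) : 0 < w -> 0 < T -> T != w -> w * ln (T / w) < T - w.
Proof.
move=> hw hT hne; have : T / w != 1.
  by apply/eqP => h; move: hne; rewrite -(divfK (lt0r_neq0 hw) T) h mul1r eqxx.
move=> /(ln_lt_sub1 (divr_gt0 hT hw)) h; have := ltr_pM2l hw; move=> e.
move: h; rewrite -e mulrBr mulr1 mulrCA divff ?gt_eqF // mulr1 //.
Qed.

Lemma sum_lt1 (R : realType) (I : finType) (F G : I -> R) (i0 : I) :
  (forall i, F i <= G i) -> F i0 < G i0 -> \sum_i F i < \sum_i G i.
Proof.
move=> hle hlt; rewrite (bigD1 i0) //= [X in _ < X](bigD1 i0) //=.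
by apply: ltr_leD => //; apply: ler_sum => i _.
Qed.

Lemma sum4 (R : realType) (E : finType) (F : (E * E)%type -> (E * E)%type -> R) :
  \sum_u \sum_v F u v = \sum_x0 \sum_x1 \sum_y0 \sum_y1 F (x0, y0) (x1, y1).
Proof.
have e1 : forall G : (E * E)%type -> R, \sum_u G u = \sum_a \sum_b G (a, b).
  by move=> G; rewrite pair_bigA /=; apply: eq_bigr => -[].
rewrite e1; apply: eq_bigr => x0 _.
rewrite (eq_bigr (fun y0 => \sum_x1 \sum_y1 F (x0, y0) (x1, y1))).
  by rewrite exchange_big.
by move=> y0 _; rewrite e1.
Qed.

Lemma cyc_reindex (R : realType) (n : nat) (g : nat -> R) : (1 <= n)%N ->
  \sum_(k < n) g ((k.+1) %% n)%N = \sum_(k < n) g k.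
Proof.
case: n => [//|m] _.
rewrite big_ord_recr /= modnn big_ord_recl /=; rewrite addrC; congr (_ + _).
by apply: eq_bigr => i _; rewrite modn_small // ltnS.
Qed.

Lemma pos_of_irr (R : realType) (T : finType) (A : T -> T -> R) (p : T -> R) :
  (forall x y, 0 <= A x y) -> irreducible A -> (forall x, 0 <= p x) ->
  \sum_x p x = 1 -> (forall y, p y = 0 -> forall x, 0 < A x y -> p x = 0) ->
  forall y, 0 < p y.
Proof.
move=> A0 irr p0 ps1 back y; rewrite lt_def p0 andbT; apply/eqP => py.
have key : forall n y, p y = 0 -> forall x, 0 < mpow A n x y -> p x = 0.
  elim=> [|n IH] y' hy' x /=.
    by case: eqP => [->//|]; rewrite ltxx.
  move=> hs; have /existsP [z hz] : [exists z, 0 < mpow A n x z * A z y'].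
    case: (boolP [exists z, 0 < mpow A n x z * A z y']) => // /existsPn hn.
    have : \sum_z mpow A n x z * A z y' <= 0.
      by apply: sumr_le0 => z _; rewrite leNgt; exact: hn z.
    by rewrite leNgt hs.
  have Az : 0 < A z y'.
    rewrite lt_def A0 andbT; apply/eqP => e; by move: hz; rewrite e mulr0 ltxx.
  have mz : 0 < mpow A n x z by move: hz; rewrite pmulr_lgt0.
  exact: (IH z (back y' hy' z Az) x mz).
have : \sum_x p x = 0.
  apply: big1 => x _; have [n hn] := irr x y; exact: (key n y py x hn).
by rewrite ps1 => /eqP; rewrite oner_eq0.
Qed.


Lemma sum_pos_ex (R : realType) (I : finType) (F : I -> R) :
  0 < \sum_i F i -> exists i, 0 < F i.
Proof.
move=> hs; have /existsP [z hz] : [exists z, 0 < F z]; last by exists z.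
case: (boolP [exists z, 0 < F z]) => // /existsPn hn.
have : \sum_z F z <= 0 by apply: sumr_le0 => z _; rewrite leNgt; exact: hn z.
by rewrite leNgt hs.
Qed.

Lemma sum_lt2 (R : realType) (I : finType) (F G : I -> I -> R) (i0 j0 : I) :
  (forall i j, F i j <= G i j) -> F i0 j0 < G i0 j0 ->
  \sum_i \sum_j F i j < \sum_i \sum_j G i j.
Proof.
move=> hle hlt; apply: (sum_lt1 (i0 := i0)).
  by move=> i; apply: ler_sum => j _.
exact: (sum_lt1 (i0 := j0)).
Qed.

Lemma tele (R : realType) (I : finType) (M : I -> I -> R) (m : I -> R) (K L : I -> R) :
  (forall v, \sum_u M u v = m v) -> (forall u, \sum_v M u v = m u) ->
  \sum_u \sum_v M u v * (K v + L v - L u) = \sum_v m v * K v.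
Proof.
move=> h2 h1.
have -> : \sum_u \sum_v M u v * (K v + L v - L u) =
   \sum_u \sum_v M u v * (K v + L v) - \sum_u \sum_v M u v * L u.
  rewrite -sumrB; apply: eq_bigr => u _; rewrite -sumrB; apply: eq_bigr => v _.
  by rewrite mulrBr.
rewrite exchange_big /=.
have -> : \sum_v \sum_u M u v * (K v + L v) = \sum_v m v * (K v + L v).
  by apply: eq_bigr => v _; rewrite -mulr_suml h2.
have -> : \sum_u \sum_v M u v * L u = \sum_u m u * L u.
  by apply: eq_bigr => u _; rewrite -mulr_suml h1.
rewrite -sumrB; apply: eq_bigr => v _; lra.
Qed.

Lemma psum (R : realType) (E : finType) (G : (E * E)%type -> R) :
  \sum_u G u = \sum_a \sum_b G (a, b).
Proof. by rewrite pair_bigA /=; apply: eq_bigr => -[]. Qed.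


Lemma core (R : realType) (E : finType) (P Q : E -> E -> R) (piQ : E -> R)
  (f : E -> E -> int) (theta : R) (r : (E * E)%type -> R) (pistar : (E * E)%type -> R) :
  stochastic P -> stochastic Q -> irreducible P -> irreducible Q ->
  invariant_prob Q piQ -> 0 < theta -> (forall u, 0 < r u) ->
  (forall u, \sum_(v : (E * E)%type) Phi P Q f theta u v * r v = r u) ->
  invariant_prob (Rstar P Q f theta r) pistar ->
  (exists n (x y y2 : nat -> E), (1 <= n)%N /\ is_cycle P n x /\ is_cycle Q n y /\
     is_cycle Q n y2 /\
     \sum_(k < n) (f (x k) (y k))%:~R != \sum_(k < n) (f (x k) (y2 k))%:~R :> R) ->
  integ (prodm (marg1 pistar) piQ) f < integ pistar f.
Proof.
move=> [P0 P1] [Q0 Q1] irrP irrQ [q0 [q1 qinv]] th0 r0 reig [s0 [s1 sinv]] Hind.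
set a := Rstar P Q f theta r.
have aE : forall u v, a u v = r v / r u * (expR (theta * (f v.1 v.2)%:~R) * P u.1 v.1 * Q u.2 v.2).
  by [].
have a0 : forall u v, 0 <= a u v.
  move=> u v; rewrite aE; apply: mulr_ge0; first by apply: divr_ge0; apply: ltW.
  by apply: mulr_ge0 => //; apply: mulr_ge0 => //; apply: ltW; apply: expR_gt0.
have apos : forall u v, 0 < P u.1 v.1 -> 0 < Q u.2 v.2 -> 0 < a u v.
  move=> u v hp hq; rewrite aE; apply: mulr_gt0; first by apply: divr_gt0.
  by apply: mulr_gt0 => //; apply: mulr_gt0 => //; apply: expR_gt0.
have aP : forall u v, P u.1 v.1 = 0 -> a u v = 0.
  by move=> u v h; rewrite aE h mulr0 mul0r mulr0.
have aQ : forall u v, Q u.2 v.2 = 0 -> a u v = 0.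
  by move=> u v h; rewrite aE h mulr0 mulr0.
have gt0E : forall (t : R), 0 <= t -> t != 0 -> 0 < t.
  by move=> t ht hn; rewrite lt_def hn ht.
have aPQ : forall u v, 0 < a u v -> 0 < P u.1 v.1 /\ 0 < Q u.2 v.2.
  move=> u v ha; split; apply: gt0E => //; apply/eqP => h.
    by move: ha; rewrite aP // ltxx.
  by move: ha; rewrite aQ // ltxx.
have a1 : forall u, \sum_v a u v = 1.
  move=> u; rewrite (eq_bigr (fun v => (Phi P Q f theta u v * r v) / r u)).
    by rewrite -mulr_suml reig divff // lt0r_neq0.
  by move=> v _; rewrite /a /Rstar; rewrite mulrC mulrA mulrC mulrA.
have {}sinv : forall y, \sum_x pistar x * a x y = pistar y := sinv.
clearbody a.
have Qex : forall y0, exists y1, 0 < Q y0 y1.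
  move=> y0; apply: sum_pos_ex; rewrite Q1; exact: ltr01.
set ps1 := marg1 pistar.
have ps10 : forall x, 0 <= ps1 x by move=> x; apply: sumr_ge0 => y _.
have ps1s : \sum_x ps1 x = 1.
  by rewrite -s1 pair_bigA /=; apply: eq_bigr => -[].
have ps1p : forall x, 0 < ps1 x.
  apply: (pos_of_irr P0 irrP ps10 ps1s) => x1 h x0 hP.
  apply: big1 => y0 _.
  have [y1 hQ] := Qex y0.
  have h' : \sum_y pistar (x1, y) = 0 := h.
  have := psumr_eq0P (fun y _ => s0 (x1, y)) h' (i:=y1) isT.
  rewrite -sinv => h2.
  have := psumr_eq0P (fun u _ => mulr_ge0 (s0 u) (a0 u (x1, y1))) h2 (i:=(x0, y0)) isT.
  move/eqP; rewrite mulf_eq0 => /orP [/eqP//|].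
  by rewrite (negbTE (lt0r_neq0 (apos (x0, y0) (x1, y1) hP hQ))).
have qp : forall y, 0 < piQ y.
  apply: (pos_of_irr Q0 irrQ q0 q1) => y h x hQ.
  move: h; rewrite -qinv => h2.
  have := psumr_eq0P (fun u _ => mulr_ge0 (q0 u) (Q0 u y)) h2 (i:=x) isT.
  by move/eqP; rewrite mulf_eq0 (negbTE (lt0r_neq0 hQ)) orbF => /eqP.
pose J x0 x1 := \sum_y0 \sum_y1 pistar (x0, y0) * a (x0, y0) (x1, y1).
have J0 : forall x0 x1, 0 <= J x0 x1.
  by move=> x0 x1; do 2 apply: sumr_ge0 => ? _; apply: mulr_ge0.
have Jrow : forall x0, \sum_x1 J x0 x1 = ps1 x0.
  move=> x0; rewrite /J exchange_big /=; apply: eq_bigr => y0 _.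
  transitivity (pistar (x0, y0) * \sum_v a (x0, y0) v); last by rewrite a1 mulr1.
  by rewrite psum mulr_sumr; apply: eq_bigr => x1 _; rewrite mulr_sumr.
have Jcol : forall x1, \sum_x0 J x0 x1 = ps1 x1.
  move=> x1; rewrite /J /ps1 /marg1.
  rewrite (eq_bigr (fun x0 => \sum_y1 \sum_y0 pistar (x0, y0) * a (x0, y0) (x1, y1))).
    2: by move=> x0 _; rewrite exchange_big.
  rewrite exchange_big /=; apply: eq_bigr => y1 _.
  by rewrite -sinv psum.
have JP : forall x0 x1, P x0 x1 = 0 -> J x0 x1 = 0.
  move=> x0 x1 h; apply: big1 => y0 _; apply: big1 => y1 _.
  by rewrite (aP (x0, y0) (x1, y1)) // mulr0.
have Jpos : forall x0 x1, 0 < P x0 x1 -> 0 < J x0 x1.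
  move=> x0 x1 hP.
  have [y0 hy0] : exists y0, 0 < pistar (x0, y0) by apply: sum_pos_ex; exact: ps1p.
  have [y1 hy1] := Qex y0.
  apply: (lt_le_trans (y := pistar (x0, y0) * a (x0, y0) (x1, y1))).
    by apply: mulr_gt0 => //; apply: apos.
  rewrite /J (bigD1 y0) //= (bigD1 y1) //= -addrA lerDl.
  apply: addr_ge0; apply: sumr_ge0 => i _; first by apply: mulr_ge0.
  by apply: sumr_ge0 => j _; apply: mulr_ge0.
pose w (u v : (E * E)%type) := J u.1 v.1 * piQ u.2 * Q u.2 v.2.
pose W (u v : (E * E)%type) := ps1 u.1 * piQ u.2 * a u v.
pose z (u v : (E * E)%type) := pistar u * a u v.
pose T4 (u v : (E * E)%type) := pistar u * Q u.2 v.2 * J u.1 v.1 / ps1 u.1.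
pose G x0 x1 := ln (J x0 x1) - ln (ps1 x0) - ln (P x0 x1).
pose h (u v : (E * E)%type) := theta * (f v.1 v.2)%:~R + ln (r v) - ln (r u).
have hkey : forall u v, 0 < P u.1 v.1 -> 0 < Q u.2 v.2 ->
    h u v = ln (a u v) - ln (P u.1 v.1) - ln (Q u.2 v.2).
  move=> u v hp hq; rewrite aE.
  have he := expR_gt0 (theta * (f v.1 v.2)%:~R).
  rewrite lnMp ?divr_gt0 ?mulr_gt0 // lnDp // !lnMp ?mulr_gt0 // expRK /h; lra.
have w0 : forall u v, 0 <= w u v.
  by move=> u v; rewrite /w; apply: mulr_ge0 => //; apply: mulr_ge0.
have W0 : forall u v, 0 <= W u v.
  by move=> u v; rewrite /W; apply: mulr_ge0 => //; apply: mulr_ge0.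
have z0 : forall u v, 0 <= z u v.
  by move=> u v; rewrite /z; apply: mulr_ge0.
have T40 : forall u v, 0 <= T4 u v.
  move=> u v; rewrite /T4; apply: divr_ge0 => //.
  by apply: mulr_ge0 => //; apply: mulr_ge0.
have wpos : forall u v, 0 < w u v -> 0 < P u.1 v.1 /\ 0 < Q u.2 v.2.
  move=> u v hw; have hQ : 0 < Q u.2 v.2.
    apply: gt0E => //; apply/eqP => e; by move: hw; rewrite /w e mulr0 ltxx.
  split => //; apply: gt0E => //; apply/eqP => e.
  by move: hw; rewrite /w JP // !mul0r ltxx.
have Uid : forall u v, 0 < w u v ->
    0 < W u v /\ h u v = ln (W u v / w u v) + G u.1 v.1.
  move=> u v hw; have [hp hq] := wpos u v hw.
  have hJ := Jpos _ _ hp; have ha := apos u v hp hq.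
  have hps := ps1p u.1; have hpq := qp u.2.
  have hW : 0 < W u v by rewrite /W; apply: mulr_gt0 => //; apply: mulr_gt0.
  split => //; rewrite hkey // lnDp // /W /w /G !lnMp ?mulr_gt0 //; lra.
have Lid : forall u v, 0 < z u v ->
    0 < T4 u v /\ h u v = - ln (T4 u v / z u v) + G u.1 v.1.
  move=> u v hz.
  have hs : 0 < pistar u.
    by apply: gt0E => //; apply/eqP => e; move: hz; rewrite /z e mul0r ltxx.
  have ha : 0 < a u v.
    by apply: gt0E => //; apply/eqP => e; move: hz; rewrite /z e mulr0 ltxx.
  have [hp hq] := aPQ u v ha.
  have hJ := Jpos _ _ hp; have hps := ps1p u.1.
  have hT : 0 < T4 u v.
    by rewrite /T4; apply: divr_gt0 => //; apply: mulr_gt0 => //; apply: mulr_gt0.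
  split => //; rewrite hkey // lnDp // /T4 /z /G lnDp ?mulr_gt0 // !lnMp ?mulr_gt0 //; lra.
clearbody G.
have Ub : forall u v, w u v * h u v <= (W u v - w u v) + w u v * G u.1 v.1.
  move=> u v; have := w0 u v; rewrite le_eqVlt => /orP [/eqP e|hw].
    by rewrite -e !mul0r subr0 addr0.
  have [hW ->] := Uid u v hw; rewrite mulrDr; have := gibbs hw hW; lra.
have Lb : forall u v, z u v - T4 u v + z u v * G u.1 v.1 <= z u v * h u v.
  move=> u v; have := z0 u v; rewrite le_eqVlt => /orP [/eqP e|hz].
    by rewrite -e !mul0r addr0 sub0r oppr_le0.
  have [hT ->] := Lid u v hz; rewrite mulrDr mulrN.
  have := gibbs hz hT; lra.
have pQs : forall y1, \sum_y0 piQ y0 * Q y0 y1 = piQ y1 := qinv.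
have wcol : forall v, \sum_u w u v = ps1 v.1 * piQ v.2.
  move=> [x1 y1]; rewrite psum /= -Jcol -pQs mulr_suml; apply: eq_bigr => x0 _.
  by rewrite mulr_sumr; apply: eq_bigr => y0 _; rewrite /w /= mulrA.
have wrow : forall u, \sum_v w u v = ps1 u.1 * piQ u.2.
  move=> [x0 y0]; rewrite psum /= -Jrow -[X in _ = X]mulr1 -(Q1 y0) mulr_suml.
  rewrite mulr_suml; apply: eq_bigr => x1 _; rewrite mulr_sumr.
  by apply: eq_bigr => y1 _; rewrite /w.
have m1 : \sum_u ps1 u.1 * piQ u.2 = 1.
  rewrite psum /= -ps1s; apply: eq_bigr => x _; by rewrite /= -mulr_sumr q1 mulr1.
have Sw : \sum_u \sum_v w u v = 1.
  by rewrite -m1; apply: eq_bigr => u _; rewrite wrow.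
have SW : \sum_u \sum_v W u v = 1.
  rewrite -m1; apply: eq_bigr => u _; rewrite -mulr_sumr a1 mulr1 //.
have Sz : \sum_u \sum_v z u v = 1.
  by rewrite -s1; apply: eq_bigr => u _; rewrite -mulr_sumr a1 mulr1.
have ST : \sum_u \sum_v T4 u v = 1.
  rewrite sum4 -ps1s; apply: eq_bigr => x0 _; rewrite -Jrow; apply: eq_bigr => x1 _.
  transitivity (J x0 x1 / ps1 x0 * \sum_y0 pistar (x0, y0) * \sum_y1 Q y0 y1).
    rewrite mulr_sumr; apply: eq_bigr => y0 _; rewrite !mulr_sumr.
    by apply: eq_bigr => y1 _; rewrite /T4 /=; lra.
  under eq_bigr do rewrite Q1 mulr1.
  by rewrite -mulrA mulVf ?mulr1 // lt0r_neq0.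
have SG : \sum_u \sum_v w u v * G u.1 v.1 = \sum_u \sum_v z u v * G u.1 v.1.
  rewrite !sum4; apply: eq_bigr => x0 _; apply: eq_bigr => x1 _ /=.
  transitivity (J x0 x1 * G x0 x1); last first.
    by rewrite /J !mulr_suml; apply: eq_bigr => y0 _; rewrite mulr_suml.
  transitivity (J x0 x1 * G x0 x1 * \sum_y0 piQ y0 * \sum_y1 Q y0 y1); last first.
    by under eq_bigr do rewrite Q1 mulr1; rewrite q1 mulr1.
  rewrite mulr_sumr; apply: eq_bigr => y0 _; rewrite !mulr_sumr.
  by apply: eq_bigr => y1 _; rewrite /w /=; lra.
have Shw : \sum_u \sum_v w u v * h u v = theta * integ (prodm ps1 piQ) f.
  rewrite (@tele _ _ w (fun u => ps1 u.1 * piQ u.2) (fun v => theta * (f v.1 v.2)%:~R) (fun u => ln (r u)) wcol wrow).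
  rewrite /integ /prodm mulr_sumr; apply: eq_bigr => v _; lra.
have Shz : \sum_u \sum_v z u v * h u v = theta * integ pistar f.
  rewrite (@tele _ _ z pistar (fun v => theta * (f v.1 v.2)%:~R) (fun u => ln (r u))).
  - rewrite /integ mulr_sumr; apply: eq_bigr => v _; lra.
  - by move=> v; exact: sinv.
  - by move=> u; rewrite -mulr_sumr a1 mulr1.
have main : theta * integ (prodm ps1 piQ) f < theta * integ pistar f.
  rewrite -Shw -Shz.
  have eU : \sum_u \sum_v ((W u v - w u v) + w u v * G u.1 v.1) =
      \sum_u \sum_v w u v * G u.1 v.1.
    transitivity (\sum_u \sum_v W u v - \sum_u \sum_v w u v +
                  \sum_u \sum_v w u v * G u.1 v.1); last by rewrite SW Sw subrr add0r.
    rewrite -sumrB -big_split; apply: eq_bigr => u _.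
    by rewrite -sumrB -big_split.
  have eL : \sum_u \sum_v (z u v - T4 u v + z u v * G u.1 v.1) =
      \sum_u \sum_v z u v * G u.1 v.1.
    transitivity (\sum_u \sum_v z u v - \sum_u \sum_v T4 u v +
                  \sum_u \sum_v z u v * G u.1 v.1); last by rewrite Sz ST subrr add0r.
    rewrite -sumrB -big_split; apply: eq_bigr => u _.
    by rewrite -sumrB -big_split.
  have hL : \sum_u \sum_v z u v * G u.1 v.1 <= \sum_u \sum_v z u v * h u v.
    by rewrite -eL; apply: ler_sum => u _; apply: ler_sum => v _; exact: Lb.
  apply: (lt_le_trans _ hL); rewrite -SG -eU.
  case: (boolP [exists u, exists v, (0 < w u v) && (W u v != w u v)]).
    move=> /existsP [u /existsP [v /andP [hw hne]]].
    apply: (sum_lt2 (i0 := u) (j0 := v)) => [u' v'|]; first exact: Ub.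
    have [hW ->] := Uid u v hw; rewrite mulrDr; have := gibbs_lt hw hW hne; lra.
  move=> /existsPn hnx.
  have hall : forall u v, 0 < w u v -> W u v = w u v.
    move=> u v hw; have := hnx u; move=> /existsPn /(_ v).
    by rewrite hw /= negbK => /eqP.
  have Hh : forall u v, 0 < P u.1 v.1 -> 0 < Q u.2 v.2 -> h u v = G u.1 v.1.
    move=> u v hp hq.
    have hw : 0 < w u v by rewrite /w; apply: mulr_gt0 => //; apply: mulr_gt0 => //; apply: Jpos.
    have [_ ->] := Uid u v hw; rewrite hall // divff ?lt0r_neq0 // ln1 add0r //.
  have cyc : forall n (x y : nat -> E), (1 <= n)%N -> is_cycle P n x -> is_cycle Q n y ->
      theta * \sum_(k < n) (f (x k) (y k))%:~R = \sum_(k < n) G (x k) (x (k.+1 %% n)%N).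
    move=> n x y hn cx cy.
    transitivity (\sum_(k < n) h (x k, y k) (x (k.+1 %% n)%N, y (k.+1 %% n)%N)); last first.
      by apply: eq_bigr => k _; apply: Hh; [exact: cx | exact: cy].
    rewrite /h.
    have e1 := cyc_reindex (fun j => theta * (f (x j) (y j))%:~R) hn.
    have e2 := cyc_reindex (fun j => ln (r (x j, y j))) hn.
    rewrite sumrB big_split /= e1 e2 mulr_sumr; lra.
  exfalso; move: Hind => [n [x [y [y2 [hn [cx [cy [cy2 hne]]]]]]]].
  move: hne; rewrite -(inj_eq (mulfI (lt0r_neq0 th0))) cyc // cyc // eqxx //.
by rewrite ltr_pM2l in main.
Qed.


Lemma swsum (R : realType) (E : finType) (G : (E * E)%type -> R) :
  \sum_u G (u.2, u.1) = \sum_u G u.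
Proof.
have inj : injective (fun u : (E * E)%type => (u.2, u.1)) by move=> [? ?] [? ?] [-> ->].
by rewrite [RHS](reindex_inj inj).
Qed.

Lemma A1 (n k : nat) : (k < n)%N -> (((k.+1 %% n) + n.-1) %% n)%N = k.
Proof.
move=> hk; rewrite modnDml.
have -> : (k.+1 + n.-1 = k + n)%N by lia.
by rewrite modnDr modn_small.
Qed.

Lemma A2 (n k : nat) : (k < n)%N -> ((((k + n.-1) %% n).+1) %% n)%N = k.
Proof.
move=> hk; rewrite -addn1 modnDml.
have -> : (k + n.-1 + 1 = k + n)%N by lia.
by rewrite modnDr modn_small.
Qed.

Lemma sumint (R : realType) (n : nat) (F G : nat -> int) :
  \sum_(k < n) F k != \sum_(k < n) G k ->
  \sum_(k < n) (F k)%:~R != \sum_(k < n) (G k)%:~R :> R.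
Proof.
by rewrite -!rmorph_sum /= eqr_int.
Qed.

Unset Implicit Arguments. Set Strict Implicit.

Theorem lemma5p8 (R : realType) (E : finType) (P Q : E -> E -> R)
  (piP piQ : E -> R) (f : E -> E -> int)
  (theta : R) (r : (E * E)%type -> R) (pistar : (E * E)%type -> R) :
  stochastic P -> stochastic Q ->
  irreducible P -> aperiodic P -> irreducible Q -> aperiodic Q ->
  invariant_prob P piP -> invariant_prob Q piQ ->
  gcd_values_one f ->
  integ (prodm piP piQ) f < 0 ->
  cond_C1 P Q f -> cond_C2 P Q f ->
  0 < theta -> spectral_radius_is (Phi P Q f theta) 1 ->
  (forall t : R, 0 < t -> spectral_radius_is (Phi P Q f t) 1 -> t = theta) ->
  (forall u, 0 < r u) ->
  (forall u, \sum_(v : (E * E)%type) Phi P Q f theta u v * r v = r u) ->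
  invariant_prob (Rstar P Q f theta r) pistar ->
  integ (prodm (marg1 pistar) piQ) f < integ pistar f /\
  integ (prodm piP (marg2 pistar)) f < integ pistar f.
Proof.
move=> sP sQ iP _ iQ _ ipP ipQ _ _ _ C2 th0 _ _ r0 reig ips.
have [n [x [y [hn [cx [cy hne]]]]]] := C2 1%N isT.
split.
  apply: (core sP sQ iP iQ ipQ th0 r0 reig ips).
  exists n, x, y, (fun k => y ((k + 1) %% n)%N); split => //; split => //; split => //.
  split; last exact: (@sumint R n (fun k => f (x k) (y k)) (fun k => f (x k) (y ((k + 1) %% n)%N)) hne).
  move=> k hk; rewrite !addn1; apply: cy; rewrite ltn_pmod //.
pose f' (a b : E) := f b a.
pose r' (u : (E * E)%type) := r (u.2, u.1).
pose ps' (u : (E * E)%type) := pistar (u.2, u.1).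
have PhiE : forall u v, Phi Q P f' theta u v = Phi P Q f theta (u.2, u.1) (v.2, v.1).
  by move=> u v; rewrite /Phi /f' /=; lra.
have reig' : forall u, \sum_v Phi Q P f' theta u v * r' v = r' u.
  move=> u; rewrite /r' -reig -(swsum (fun v => Phi P Q f theta (u.2, u.1) v * r v)) /=.
  by apply: eq_bigr => v _; rewrite PhiE.
have RE : forall u v, Rstar Q P f' theta r' u v = Rstar P Q f theta r (u.2, u.1) (v.2, v.1).
  by move=> u v; rewrite /Rstar PhiE.
have ips' : invariant_prob (Rstar Q P f' theta r') ps'.
  move: ips => [s0 [s1 sinv]]; split; first by move=> u; apply: s0.
  split; first by rewrite /ps' (swsum pistar).
  move=> v; rewrite /ps' -sinv -(swsum (fun u => pistar u * Rstar P Q f theta r u (v.2, v.1))).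
  by apply: eq_bigr => u _; rewrite RE.
have r0' : forall u, 0 < r' u by move=> u; apply: r0.
have := core sQ sP iQ iP ipP th0 r0' reig' ips'.
have -> : integ ps' f' = integ pistar f.
  by rewrite /integ -(swsum (fun u => pistar u * (f u.1 u.2)%:~R)).
have -> : integ (prodm (marg1 ps') piP) f' = integ (prodm piP (marg2 pistar)) f.
  rewrite /integ -(swsum (fun u => prodm piP (marg2 pistar) u * (f u.1 u.2)%:~R)).
  by apply: eq_bigr => u _; rewrite /prodm /marg1 /marg2 /ps' /f' /= [piP _ * _]mulrC.
apply.
exists n, y, x, (fun k => x ((k + n.-1) %% n)%N); split => //; split => //; split => //.
split.
  move=> k hk; rewrite A1 //; have := cx ((k + n.-1) %% n)%N; rewrite A2 //; apply.
  by rewrite ltn_pmod.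
rewrite /f'.
have e : \sum_(k < n) (f (x ((k + n.-1) %% n)%N) (y k))%:~R =
         \sum_(k < n) (f (x k) (y ((k + 1) %% n)%N))%:~R :> R.
  rewrite -(cyc_reindex (fun j => (f (x ((j + n.-1) %% n)%N) (y j))%:~R) hn).
  by apply: eq_bigr => k _; rewrite A1 // addn1.
rewrite e.
exact: (@sumint R n (fun k => f (x k) (y k)) (fun k => f (x k) (y ((k + 1) %% n)%N)) hne).
Qed.
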